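(* Let $n\ge 4$ and let $D_1,\dots,D_{n-1}$ be positive numbers satisfying $D_kD_{l-j}\ge D_jD_{l-k}+D_lD_{k-j}$ for all integers $1\le j<k<l\le n-1$. Put $s_k=\sin(k\pi/n)$ and $a_k=\log(D_k/s_k)$. Then for all $1\le j<k<l\le n-1$, $$a_k+a_{l-j}\ \ge\ \frac{s_js_{l-k}}{s_ks_{l-j}}\,(a_j+a_{l-k})+\frac{s_ls_{k-j}}{s_ks_{l-j}}\,(a_l+a_{k-j}).$$ *)

(* Defs.v *)
From Stdlib Require Import Reals Lra Lia.
Open Scope R_scope.

Definition s (n k : nat) : R := sin (INR k * PI / INR n).

Definition a (n : nat) (D : nat -> R) (k : nat) : R := ln (D k / s n k).

(* Main.v *)
Require Import Defs.
From Stdlib Require Import Reals Lra Lia.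
Open Scope R_scope.

Lemma s_pos n k : (1 <= k)%nat -> (k <= n - 1)%nat -> (4 <= n)%nat -> 0 < s n k.
Proof.
  intros h1 h2 h3. unfold s.
  assert (Hk : 1 <= INR k) by (apply (le_INR 1); lia).
  assert (Hkn : INR k + 1 <= INR n) by (rewrite <- S_INR; apply le_INR; lia).
  assert (Hn : 0 < INR n) by lra.
  pose proof PI_RGT_0.
  apply sin_gt_0.
  - unfold Rdiv. apply Rmult_lt_0_compat; [nra | apply Rinv_0_lt_compat; lra].
  - apply (Rmult_lt_reg_r (INR n)); auto. unfold Rdiv.
    rewrite Rmult_assoc, Rinv_l by lra. nra.
Qed.

Lemma ptolemy x y z : sin y * sin (z - x) = sin x * sin (z - y) + sin z * sin (y - x).
Proof. rewrite !sin_minus. ring. Qed.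

Lemma s_sub n p q : (q <= p)%nat -> s n (p - q) = sin (INR p * PI / INR n - INR q * PI / INR n).
Proof. intros h. unfold s. rewrite minus_INR by exact h. f_equal. unfold Rdiv. ring. Qed.

Lemma wamgm w1 w2 X Y : 0 <= w1 -> 0 <= w2 -> w1 + w2 = 1 ->
  exp (w1 * X + w2 * Y) <= w1 * exp X + w2 * exp Y.
Proof.
  intros h1 h2 h3. set (m := w1 * X + w2 * Y).
  assert (EX : exp X = exp m * exp (X - m)) by (rewrite <- exp_plus; f_equal; ring).
  assert (EY : exp Y = exp m * exp (Y - m)) by (rewrite <- exp_plus; f_equal; ring).
  pose proof (exp_ineq1_le (X - m)). pose proof (exp_ineq1_le (Y - m)).
  pose proof (exp_pos m).
  rewrite EX, EY.
  assert (w1 * exp (X - m) + w2 * exp (Y - m) >= 1).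
  { assert (w1 * (1 + (X - m)) + w2 * (1 + (Y - m)) = 1) by (unfold m; nra). nra. }
  nra.
Qed.

Theorem mainTheorem10 (n : nat) (D : nat -> R)
  (hn : (4 <= n)%nat)
  (hpos : forall k : nat, (1 <= k <= n - 1)%nat -> 0 < D k)
  (hineq : forall j k l : nat, (1 <= j)%nat -> (j < k)%nat -> (k < l)%nat ->
      (l <= n - 1)%nat ->
      D k * D (l - j)%nat >= D j * D (l - k)%nat + D l * D (k - j)%nat) :
  forall j k l : nat, (1 <= j)%nat -> (j < k)%nat -> (k < l)%nat ->
    (l <= n - 1)%nat ->
    a n D k + a n D (l - j)%nat >=
      (s n j * s n (l - k)%nat) / (s n k * s n (l - j)%nat)
        * (a n D j + a n D (l - k)%nat)
      + (s n l * s n (k - j)%nat) / (s n k * s n (l - j)%nat)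
        * (a n D l + a n D (k - j)%nat).
Proof.
  intros j k l h1 h2 h3 h4.
  pose proof (hineq j k l h1 h2 h3 h4) as HI.
  assert (Sj := s_pos n j ltac:(lia) ltac:(lia) hn).
  assert (Sk := s_pos n k ltac:(lia) ltac:(lia) hn).
  assert (Sl := s_pos n l ltac:(lia) ltac:(lia) hn).
  assert (Slj := s_pos n (l - j) ltac:(lia) ltac:(lia) hn).
  assert (Slk := s_pos n (l - k) ltac:(lia) ltac:(lia) hn).
  assert (Skj := s_pos n (k - j) ltac:(lia) ltac:(lia) hn).
  assert (Dj := hpos j ltac:(lia)).
  assert (Dk := hpos k ltac:(lia)).
  assert (Dl := hpos l ltac:(lia)).
  assert (Dlj := hpos (l - j)%nat ltac:(lia)).
  assert (Dlk := hpos (l - k)%nat ltac:(lia)).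
  assert (Dkj := hpos (k - j)%nat ltac:(lia)).
  assert (PT : s n k * s n (l - j) = s n j * s n (l - k) + s n l * s n (k - j)).
  { rewrite !s_sub by lia. unfold s. apply ptolemy. }
  set (P := s n k * s n (l - j)) in *.
  assert (HP : 0 < P) by (unfold P; nra).
  set (w1 := s n j * s n (l - k) / P).
  set (w2 := s n l * s n (k - j) / P).
  assert (W1 : 0 <= w1) by (unfold w1; apply Rlt_le, Rdiv_lt_0_compat; nra).
  assert (W2 : 0 <= w2) by (unfold w2; apply Rlt_le, Rdiv_lt_0_compat; nra).
  assert (W : w1 + w2 = 1) by (unfold w1, w2; rewrite PT; field; lra).
  set (X := a n D j + a n D (l - k)%nat).
  set (Y := a n D l + a n D (k - j)%nat).
  assert (EA : forall i, (1 <= i)%nat -> (i <= n - 1)%nat -> exp (a n D i) = D i / s n i).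
  { intros i hi1 hi2. unfold a. apply exp_ln.
    apply Rdiv_lt_0_compat; [apply hpos; lia | apply s_pos; lia]. }
  assert (EX : exp X = D j * D (l - k)%nat / (s n j * s n (l - k))).
  { unfold X. rewrite exp_plus, !EA by lia. field. lra. }
  assert (EY : exp Y = D l * D (k - j)%nat / (s n l * s n (k - j))).
  { unfold Y. rewrite exp_plus, !EA by lia. field. lra. }
  assert (EL : exp (a n D k + a n D (l - j)%nat) = D k * D (l - j)%nat / P).
  { rewrite exp_plus, !EA by lia. unfold P. field. lra. }
  assert (KEY : w1 * exp X + w2 * exp Y <= exp (a n D k + a n D (l - j)%nat)).
  { rewrite EX, EY, EL. unfold w1, w2.
    replace (s n j * s n (l - k) / P * (D j * D (l - k)%nat / (s n j * s n (l - k))) +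
      s n l * s n (k - j) / P * (D l * D (k - j)%nat / (s n l * s n (k - j))))
      with ((D j * D (l - k)%nat + D l * D (k - j)%nat) / P) by (field; lra).
    unfold Rdiv. apply Rmult_le_compat_r; [apply Rlt_le, Rinv_0_lt_compat; lra | lra]. }
  pose proof (wamgm w1 w2 X Y W1 W2 W) as AM.
  apply Rle_ge.
  destruct (Rle_lt_dec (w1 * X + w2 * Y) (a n D k + a n D (l - j)%nat)) as [H|H]; auto.
  apply exp_increasing in H. lra.
Qed.
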